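(* Let $d\ge 1$, $\eta>0$, $g\in\mathbb{R}^d$ and $p\in\mathbb{R}^d$ with $\eta p\in[-1,0]^d$. Define $\psi:\operatorname{dom}\psi\to\mathbb{R}$ by $$\psi(\lambda)=\lambda-\sum_{i=1}^d (1-\eta p(i))\log(\lambda+\eta g(i)),\qquad \operatorname{dom}\psi=\{\lambda\in\mathbb{R}:\lambda+\eta g(i)>0\ \forall i\in[d]\}.$$ Then $\psi$ has a unique minimizer $\lambda^\star\in\operatorname{dom}\psi$. Moreover, defining $x\in\mathbb{R}^d$ and $\hat g\in\mathbb{R}^d$ by $$x(i)=\frac{1-\eta p(i)}{\lambda^\star+\eta g(i)},\qquad \hat g(i)=p(i)\cdot\frac{\lambda^\star+\eta g(i)}{1-\eta p(i)},\qquad i\in[d],$$ we have $x\in\Delta$, $x\odot\hat g=p$, and $$x\in\operatorname*{argmin}_{y\in\Delta}\ \langle g,y\rangle+\langle\hat g,y\rangle+\eta^{-1}h(y).$$ In other words, the pair $(x,\hat g)$ solves the system of equations $x\odot \hat g = p$, $x\in\operatorname{argmin}_{y\in\Delta}\langle g+\hat g,y\rangle+\eta^{-1}h(y)$.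
   Context: $\Delta=\{x\in\mathbb{R}^d: x(i)\ge 0\ \forall i,\ \sum_{i=1}^d x(i)=1\}$ is the probability simplex. $h$ is the log-barrier $h(x)=-d\log d-\sum_{i=1}^d\log x(i)$ (equal to $+\infty$ if some $x(i)=0$). $\odot$ denotes the entrywise product of vectors. $[d]=\{1,\dots,d\}$. *)

(* Defs.v *)
From HB Require Import structures.
From mathcomp Require Import all_boot all_order all_algebra.
From mathcomp Require Import all_classical all_reals all_analysis.
Set Implicit Arguments. Unset Strict Implicit. Unset Printing Implicit Defensive.
Import Order.TTheory GRing.Theory Num.Theory.
Local Open Scope ring_scope.

Definition simplex (R : realType) (d : nat) (x : 'I_d -> R) : Prop :=
  (forall i, 0 <= x i) /\ \sum_(i < d) x i = 1.

Definition dotv (R : realType) (d : nat) (u v : 'I_d -> R) : R :=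
  \sum_(i < d) u i * v i.

Definition logbarrier (R : realType) (d : nat) (x : 'I_d -> R) : \bar R :=
  if `[< forall i, 0 < x i >] then
    ((- (d%:R * ln (d%:R : R)) - \sum_(i < d) ln (x i))%:E)%E
  else +oo%E.

Definition regobj (R : realType) (d : nat) (eta : R) (c y : 'I_d -> R) : \bar R :=
  ((dotv c y)%:E + (eta^-1)%:E * logbarrier y)%E.

Definition psi_dom (R : realType) (d : nat) (eta : R) (g : 'I_d -> R) (lam : R) : Prop :=
  forall i, 0 < lam + eta * g i.

Definition psi (R : realType) (d : nat) (eta : R) (g p : 'I_d -> R) (lam : R) : R :=
  lam - \sum_(i < d) (1 - eta * p i) * ln (lam + eta * g i).

Definition is_psi_minimizer (R : realType) (d : nat) (eta : R) (g p : 'I_d -> R)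
  (lam : R) : Prop :=
  psi_dom eta g lam /\ forall mu, psi_dom eta g mu -> psi eta g p lam <= psi eta g p mu.

(* Main.v *)
Require Import Defs.
From HB Require Import structures.
From mathcomp Require Import all_boot all_order all_algebra.
From mathcomp Require Import all_classical all_reals all_analysis.
From mathcomp Require Import ring lra.
Import Order.TTheory GRing.Theory Num.Theory numFieldNormedType.Exports.
Local Open Scope ring_scope.

Lemma ln_sub_le (R : realType) (u v : R) : 0 < u -> 0 < v -> ln u - ln v <= u / v - 1.
Proof.
move=> hu hv; have hz : 0 < u / v by rewrite divr_gt0.
rewrite -ln_div ?posrE //.
have := expR_ge1Dx (ln (u / v)); rewrite lnK ?posrE //; lra.
Qed.

Lemma ln_sub_lt (R : realType) (u v : R) : 0 < u -> 0 < v -> u != v ->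
  ln u - ln v < u / v - 1.
Proof.
move=> hu hv huv; have hz : 0 < u / v by rewrite divr_gt0.
rewrite -ln_div ?posrE //.
have hl : ln (u / v) != 0.
  rewrite ln_eq0 //; apply/negP => /eqP h; move/negP: huv; apply; apply/eqP.
  have -> : u = u / v * v by rewrite divfK // gt_eqF.
  by rewrite h mul1r.
have := expR_gt1Dx hl; rewrite lnK ?posrE //; lra.
Qed.

Lemma sum_cont (R : realType) (d : nat) (F : 'I_d -> R -> R) (x : R) :
  (forall i, {for x, continuous (F i)}) ->
  {for x, continuous (fun t => \sum_(i < d) F i t)}.
Proof.
move=> hF.
suff H : forall r : seq 'I_d, {for x, continuous (fun t => \sum_(i <- r) F i t)}.
  exact: H.
elim=> [|j r IH].
  have -> : (fun t => \sum_(i <- [::]) F i t) = (fun=> 0 : R).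
    by apply/funext => t; rewrite big_nil.
  exact: cst_continuous.
have -> : (fun t => \sum_(i <- j :: r) F i t) = (F j + fun t => \sum_(i <- r) F i t).
  by apply/funext => t; rewrite big_cons.
exact: (continuousD (hF j) IH).
Qed.

Lemma exists_root (R : realType) (d : nat) (a c : 'I_d -> R) :
  (1 <= d)%N -> (forall i, 1 <= a i <= 2) ->
  exists lam, (forall i, 0 < lam + c i) /\ \sum_(i < d) a i / (lam + c i) = 1.
Proof.
move=> hd ha.
pose i0 := Ordinal hd.
case: (@arg_minP _ _ _ i0 xpredT c isT) => j _ Hj.
pose f t := \sum_(i < d) a i / (t + c i).
pose lo := 2^-1 - c j.
pose hi := (2 * d%:R + 1) - c j.
have hD : 1 <= (d%:R : R) by rewrite ler1n.
have pos t i : lo <= t -> 2^-1 <= t + c i.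
  move=> h; have := Hj i isT; rewrite /lo in h; lra.
have loHi : lo <= hi by rewrite /lo /hi; lra.
have flo : 1 <= f lo.
  rewrite /f (bigD1 j) //=.
  have h1 : 0 <= \sum_(i < d | i != j) a i / (lo + c i).
    apply: sumr_ge0 => i _; apply: divr_ge0.
      by have := ha i; lra.
    by have := pos lo i (lexx _); lra.
  have -> : lo + c j = 2^-1 by rewrite /lo; lra.
  rewrite invrK; have := ha j; lra.
have fhi : f hi <= 1.
  rewrite /f.
  apply: (@le_trans _ _ (\sum_(i < d) (2 / (2 * d%:R + 1) : R))).
    apply: ler_sum => i _.
    have hp := pos hi i loHi.
    have hge : 2 * d%:R + 1 <= hi + c i.
      have := Hj i isT; rewrite /hi; lra.
    rewrite ler_pdivrMr; last lra.
    rewrite mulrAC ler_pdivlMr; last lra.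
    have := ha i; nra.
  rewrite sumr_const card_ord -[X in X <= _]mulr_natr mulrAC ler_pdivrMr; last lra.
  lra.
have fcont : {within `[lo, hi], continuous f}%classic.
  apply: continuous_in_subspaceT => t.
  rewrite inE /= in_itv /= => /andP [ht _].
  apply: sum_cont => i.
  have hp := pos t i ht.
  apply: continuousM; first exact: cst_continuous.
  apply: continuousV; first by apply/negP => /eqP h; lra.
  apply: continuousD.
    exact: cvg_id.
  exact: cst_continuous.
have hv : Num.min (f lo) (f hi) <= 1 <= Num.max (f lo) (f hi).
  apply/andP; split.
    by rewrite ge_min fhi orbT.
  by rewrite le_max flo.
have [lam hlam flam] := @IVT R f lo hi 1 loHi fcont hv.
exists lam; split => //.
move: hlam; rewrite in_itv /= => /andP [h _] i.
have := pos lam i h; lra.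
Qed.

Lemma psi_key (R : realType) (d : nat) (a c : 'I_d -> R) (lam mu : R) :
  (forall i, 0 < a i) -> (forall i, 0 < lam + c i) -> (forall i, 0 < mu + c i) ->
  \sum_(i < d) a i / (lam + c i) = 1 ->
  \sum_(i < d) a i * ln (mu + c i) - \sum_(i < d) a i * ln (lam + c i) <= mu - lam.
Proof.
move=> ha hl hm hs.
have -> : mu - lam = \sum_(i < d) a i * ((mu + c i) / (lam + c i) - 1).
  have E i : a i * ((mu + c i) / (lam + c i) - 1) = (mu - lam) * (a i / (lam + c i)).
    by field; rewrite gt_eqF.
  by rewrite (eq_bigr _ (fun i _ => E i)) -mulr_sumr hs mulr1.
rewrite -sumrB; apply: ler_sum => i _.
rewrite -mulrBr ler_pM2l //; exact: ln_sub_le.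
Qed.

Lemma psi_key_strict (R : realType) (d : nat) (a c : 'I_d -> R) (lam mu : R) :
  (1 <= d)%N -> (forall i, 0 < a i) -> (forall i, 0 < lam + c i) -> (forall i, 0 < mu + c i) ->
  \sum_(i < d) a i / (lam + c i) = 1 -> mu != lam ->
  \sum_(i < d) a i * ln (mu + c i) - \sum_(i < d) a i * ln (lam + c i) < mu - lam.
Proof.
move=> hd ha hl hm hs hne.
have -> : mu - lam = \sum_(i < d) a i * ((mu + c i) / (lam + c i) - 1).
  have E i : a i * ((mu + c i) / (lam + c i) - 1) = (mu - lam) * (a i / (lam + c i)).
    by field; rewrite gt_eqF.
  by rewrite (eq_bigr _ (fun i _ => E i)) -mulr_sumr hs mulr1.
rewrite -sumrB; apply: ltr_sum.
  by apply/hasP; exists (Ordinal hd); rewrite ?mem_index_enum.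
move=> i _; rewrite -mulrBr ltr_pM2l //; apply: ln_sub_lt => //.
apply/negP => /eqP h; move/negP: hne; apply; apply/eqP.
have : mu + c i - c i = lam + c i - c i by rewrite h.
by rewrite !addrK.
Qed.

Theorem mainTheorem1 (R : realType) (d : nat) (eta : R) (g p : 'I_d -> R)
  (hd : (1 <= d)%N) (heta : 0 < eta)
  (hp : forall i, -1 <= eta * p i <= 0) :
  exists lam : R,
    is_psi_minimizer eta g p lam /\
    (forall lam', is_psi_minimizer eta g p lam' -> lam' = lam) /\
    let x : 'I_d -> R := fun i => (1 - eta * p i) / (lam + eta * g i) in
    let ghat : 'I_d -> R := fun i => p i * ((lam + eta * g i) / (1 - eta * p i)) in
    simplex x /\
    (forall i, x i * ghat i = p i) /\
    (forall y, simplex y ->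
       (regobj eta (fun i => (g i + ghat i)%R) x <= regobj eta (fun i => (g i + ghat i)%R) y)%E).
Proof.
have ha : forall i, 1 <= 1 - eta * p i <= 2.
  by move=> i; have /andP[h1 h2] := hp i; apply/andP; split; lra.
have hapos : forall i, 0 < 1 - eta * p i.
  by move=> i; have /andP[h1 h2] := ha i; lra.
have [lam [hpos hsum]] :=
  @exists_root R d (fun i => 1 - eta * p i) (fun i => eta * g i) hd ha.
have hmin : is_psi_minimizer eta g p lam.
  split; first exact: hpos.
  move=> mu hmu.
  have := @psi_key R d (fun i => 1 - eta * p i) (fun i => eta * g i) lam mu hapos hpos hmu hsum.
  rewrite /psi; lra.
exists lam; split => //; split.
  move=> lam' [hd' hmin']; apply/eqP; apply/negP => hne.
  have := @psi_key_strict R d (fun i => 1 - eta * p i) (fun i => eta * g i) lam lam'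
    hd hapos hpos hd' hsum (introT negP hne).
  have := hmin' lam hpos; rewrite /psi; lra.
move=> x ghat.
have hxpos : forall i, 0 < x i by move=> i; rewrite /x divr_gt0.
have hxsum : \sum_(i < d) x i = 1 by exact: hsum.
split; first by split => // i; exact: ltW.
split.
  move=> i; rewrite /x /ghat; field.
  by rewrite !gt_eqF.
move=> y [hy0 hy1].
rewrite /regobj /logbarrier asboolT //.
case: (asboolP (forall i, 0 < y i)) => hy; last first.
  by rewrite mulry gtr0_sg ?invr_gt0 // mul1e addey // leey.
rewrite -!EFinM -!EFinD lee_fin.
have key : forall i, (eta * (g i + ghat i) + lam) * x i - ln (x i)
    <= (eta * (g i + ghat i) + lam) * y i - ln (y i).
  move=> i.
  have hL := hpos i; have hA := hapos i.
  have ht : eta * (g i + ghat i) + lam = (lam + eta * g i) / (1 - eta * p i).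
    rewrite /ghat; field; by rewrite gt_eqF.
  have H := @ln_sub_le R _ _ (hy i) (hxpos i).
  have e1 : y i / x i = (lam + eta * g i) / (1 - eta * p i) * y i.
    rewrite /x; field; by rewrite !gt_eqF.
  have e2 : (lam + eta * g i) / (1 - eta * p i) * x i = 1.
    rewrite /x; field; by rewrite !gt_eqF.
  rewrite e1 in H; rewrite ht e2; move: H.
  generalize (ln (y i)) (ln (x i)) ((lam + eta * g i) / (1 - eta * p i) * y i).
  clear => u v T H; lra.
have S : \sum_(i < d) ((eta * (g i + ghat i) + lam) * x i - ln (x i))
    <= \sum_(i < d) ((eta * (g i + ghat i) + lam) * y i - ln (y i)).
  by apply: ler_sum => i _; exact: key.
have E : forall z : 'I_d -> R,
    \sum_(i < d) ((eta * (g i + ghat i) + lam) * z i - ln (z i))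
    = eta * dotv (fun i => g i + ghat i) z + lam * \sum_(i < d) z i - \sum_(i < d) ln (z i).
  move=> z; rewrite sumrB /dotv !mulr_sumr -big_split /=; congr (_ - _).
  by apply: eq_bigr => i _; ring.
rewrite !E hy1 hxsum in S.
have Hf : forall D K S0 : R, D + eta^-1 * (K - S0) = eta^-1 * (eta * D - S0 + K).
  by move=> D K S0; field; rewrite gt_eqF.
rewrite !Hf ler_pM2l ?invr_gt0 // lerD2r.
  move: S; generalize (eta * dotv (fun i => g i + ghat i) x) (eta * dotv (fun i => g i + ghat i) y)
    (\sum_(i < d) ln (x i)) (\sum_(i < d) ln (y i)).
  clear => a b u v S; lra.
Qed.
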